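(* Let $(\mathcal{C},\mathbb{E},\mathfrak{s})$ be an extriangulated category with enough injective objects and enough projective morphisms, and let $\mathbb{F}\subseteq\mathbb{E}$ be an additive subfunctor having enough injective morphisms. Then the following are equivalent: (1) $\mathbb{F}$ has enough special injective morphisms; (2) $\mathbb{F}=\mathrm{Ph}(\mathbb{F})^\star$; (3) $\mathrm{Ph}(\mathbb{F})^{\perp_{\mathbb{E}}}=\mathbb{F}\text{-}\mathrm{inj}$.
   Context: An extriangulated category $(\mathcal{C},\mathbb{E},\mathfrak{s})$ (Nakaoka–Palu): additive $\mathcal{C}$, biadditive $\mathbb{E}:\mathcal{C}^{\mathrm{op}}\times\mathcal{C}\to\mathrm{Ab}$, additive realization $\mathfrak{s}$ assigning to each $\delta\in\mathbb{E}(C,A)$ an equivalence class of sequences $A\to B\to C$, forming $\mathbb{E}$-triangles $A\to B\to C\overset{\delta}{\dashrightarrow}$, satisfying (ET1)–(ET4), (ET3)$^{\mathrm{op}}$, (ET4)$^{\mathrm{op}}$. Notation $a_\star\delta=\mathbb{E}(C,a)(\delta)$, $c^\star\delta=\mathbb{E}(c,A)(\delta)$; a morphism of $\mathbb{E}$-triangles is a commuting triple $(a,b,c)$ with $a_\star\delta=c^\star\delta'$. Enough injective objects: every $A$ admits an $\mathbb{E}$-triangle $A\to E\to C\overset{\delta}{\dashrightarrow}$ with $\mathbb{E}(-,E)=0$. Enough projective morphisms: every $C$ admits an $\mathbb{E}$-triangle $K\to P\xrightarrow{p}C\overset{\gamma}{\dashrightarrow}$ with $p^\star\delta=0$ for all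 $\delta\in\mathbb{E}(C,A)$. Additive subfunctor $\mathbb{F}$: subgroups $\mathbb{F}(C,A)\subseteq\mathbb{E}(C,A)$ stable under $a_\star,c^\star$; $\mathbb{F}$-triangles have extension in $\mathbb{F}$. $\mathrm{Ph}(\mathbb{F})$: morphisms $\varphi:X\to C$ with $\varphi^\star\delta\in\mathbb{F}(X,A)$ for all $\delta\in\mathbb{E}(C,A)$ (an ideal). $\mathbb{F}\text{-}\mathrm{inj}$: $i:A\to Y$ with $i_\star\delta=0$ for all $\delta\in\mathbb{F}(C,A)$. For an ideal $\mathcal{I}$, $\mathcal{I}^\star(X,A)=\{i^\star\delta\mid i\in\mathcal{I}(X,C),\delta\in\mathbb{E}(C,A)\}$ and $\mathcal{I}^{\perp_{\mathbb{E}}}=\{g:A\to Y\mid m^\star g_\star\delta=0\ \forall m\in\mathcal{I},\,m:X\to C,\ \forall\delta\in\mathbb{E}(C,A)\}$. $\mathbb{F}$ has enough injective morphisms: every $A$ admits an $\mathbb{F}$-triangle $A\xrightarrow{e}B\to C\overset{\delta}{\dashrightarrow}$ with $e\in\mathbb{F}\text{-}\mathrm{inj}$; enough special injective morphisms: moreover there is an $\mathbb{E}$-triangle $A\to B'\to C'\overset{\delta'}{\dashrightarrow}$ and a morphism $(\mathrm{id}_A,b,\varphi)$ from the former to it with $\varphi\in\mathrm{Ph}(\mathbb{F})$. *)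

(* Defs.v *)
From HB Require Import structures.
From mathcomp Require Import all_boot all_algebra.
Set Implicit Arguments. Unset Strict Implicit. Unset Printing Implicit Defensive.
Import GRing.Theory.
Local Open Scope ring_scope.

Record precat := PreCat {
  ob : Type;
  hom : ob -> ob -> zmodType;
  idm : forall X, hom X X;
  comp : forall X Y Z, hom Y Z -> hom X Y -> hom X Z;
  compA : forall W X Y Z (h : hom Y Z) (g : hom X Y) (f : hom W X),
      comp h (comp g f) = comp (comp h g) f;
  comp1m : forall X Y (f : hom X Y), comp (idm Y) f = f;
  compm1 : forall X Y (f : hom X Y), comp f (idm X) = f;
  compDl : forall X Y Z (g g' : hom Y Z) (f : hom X Y),
      comp (g + g') f = comp g f + comp g' f;
  compDr : forall X Y Z (g : hom Y Z) (f f' : hom X Y),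
      comp g (f + f') = comp g f + comp g f'
}.
Arguments hom {p}.
Arguments idm {p}.
Arguments comp {p X Y Z}.

Section Cat.
Variable C : precat.

Definition is_zero_obj (Z : ob C) : Prop :=
  forall X : ob C, (forall f : hom X Z, f = 0) /\ (forall g : hom Z X, g = 0).

Definition is_biprod (A B P : ob C) (p1 : hom P A) (p2 : hom P B)
    (i1 : hom A P) (i2 : hom B P) : Prop :=
  [/\ comp p1 i1 = idm A, comp p2 i2 = idm B, comp p1 i2 = 0, comp p2 i1 = 0
    & comp i1 p1 + comp i2 p2 = idm P].

Definition additive_cat : Prop :=
  (exists Z : ob C, is_zero_obj Z) /\
  (forall A B : ob C, exists P p1 p2 i1 i2, @is_biprod A B P p1 p2 i1 i2).

Definition is_iso (X Y : ob C) (f : hom X Y) : Prop :=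
  exists g : hom Y X, comp g f = idm X /\ comp f g = idm Y.
End Cat.

(* Eob Z A = E(Z,A);  pull c d = c^* d;  push a d = a_* d.             *)
Record bifunctor (C : precat) := Bifunctor {
  Eob : ob C -> ob C -> zmodType;
  pull : forall (X Y A : ob C), hom X Y -> Eob Y A -> Eob X A;
  push : forall (Z A B : ob C), hom A B -> Eob Z A -> Eob Z B
}.
Arguments Eob {C}.
Arguments pull {C} _ {X Y A}.
Arguments push {C} _ {Z A B}.

Section Bifun.
Variables (C : precat) (E : bifunctor C).

Definition biadditive_functor : Prop :=
  (forall Z A (d : Eob E Z A), pull E (idm Z) d = d) /\
      (forall Z A (d : Eob E Z A), push E (idm A) d = d) /\
      (forall X Y Z A (c : hom Y Z) (c' : hom X Y) (d : Eob E Z A),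
          pull E (comp c c') d = pull E c' (pull E c d)) /\
      (forall Z A B D (a : hom B D) (a' : hom A B) (d : Eob E Z A),
          push E (comp a a') d = push E a (push E a' d)) /\
      (forall X Z A B (c : hom X Z) (a : hom A B) (d : Eob E Z A),
          push E a (pull E c d) = pull E c (push E a d)) /\
      (forall X Z A (c : hom X Z) (d d' : Eob E Z A),
          pull E c (d + d') = pull E c d + pull E c d') /\
      (forall Z A B (a : hom A B) (d d' : Eob E Z A),
          push E a (d + d') = push E a d + push E a d') /\
      (forall X Z A (c c' : hom X Z) (d : Eob E Z A),
          pull E (c + c') d = pull E c d + pull E c' d)
    /\ (forall Z A B (a a' : hom A B) (d : Eob E Z A),
          push E (a + a') d = push E a d + push E a' d).

(* A realization: @s _ _ d B f g  means  "A -f-> B -g-> Z belongs to s(d)",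
   for d in E(Z,A). *)
Definition realization_data :=
  forall (Z A : ob C), Eob E Z A -> forall B : ob C, hom A B -> hom B Z -> Prop.

Definition seq_equiv (A Z B B' : ob C) (f : hom A B) (g : hom B Z)
    (f' : hom A B') (g' : hom B' Z) : Prop :=
  exists b : hom B B', [/\ is_iso b, comp b f = f' & comp g' b = g].

(* d in E(Z,A) is the sum  d1 (+) d2  of d1 in E(Z1,A1), d2 in E(Z2,A2),
   with respect to the given biproducts A = A1 (+) A2 and Z = Z1 (+) Z2. *)
Definition is_Esum (A1 A2 A Z1 Z2 Z : ob C)
    (pA1 : hom A A1) (pA2 : hom A A2) (iZ1 : hom Z1 Z) (iZ2 : hom Z2 Z)
    (d1 : Eob E Z1 A1) (d2 : Eob E Z2 A2) (d : Eob E Z A) : Prop :=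
  [/\ push E pA1 (pull E iZ1 d) = d1, push E pA2 (pull E iZ2 d) = d2,
      push E pA1 (pull E iZ2 d) = 0 & push E pA2 (pull E iZ1 d) = 0].

Section Real.
Variable s : realization_data.

(* s(d) is an equivalence class of sequences, and s is a realization
   (Nakaoka--Palu, Def. 2.9). *)
Definition is_realization : Prop :=
  [/\ (forall Z A (d : Eob E Z A), exists B f g, @s _ _ d B f g),
      (forall Z A (d : Eob E Z A) B B' (f : hom A B) (g : hom B Z)
              (f' : hom A B') (g' : hom B' Z),
          @s _ _ d B f g -> seq_equiv f g f' g' -> @s _ _ d B' f' g'),
      (forall Z A (d : Eob E Z A) B B' (f : hom A B) (g : hom B Z)
              (f' : hom A B') (g' : hom B' Z),
          @s _ _ d B f g -> @s _ _ d B' f' g' -> seq_equiv f g f' g')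
    & (forall A Z A' Z' (d : Eob E Z A) (d' : Eob E Z' A')
              (a : hom A A') (c : hom Z Z') B B' (f : hom A B) (g : hom B Z)
              (f' : hom A' B') (g' : hom B' Z'),
          push E a d = pull E c d' -> @s _ _ d B f g -> @s _ _ d' B' f' g' ->
          exists b : hom B B', comp b f = comp f' a /\ comp g' b = comp c g)].

Definition additive_realization : Prop :=
  (forall A Z P (p1 : hom P A) (p2 : hom P Z) (i1 : hom A P) (i2 : hom Z P),
      is_biprod p1 p2 i1 i2 -> @s _ _ (0 : Eob E Z A) P i1 p2) /\
  (forall A1 A2 A Z1 Z2 Z B1 B2 B
          (pA1 : hom A A1) (pA2 : hom A A2) (iA1 : hom A1 A) (iA2 : hom A2 A)
          (pZ1 : hom Z Z1) (pZ2 : hom Z Z2) (iZ1 : hom Z1 Z) (iZ2 : hom Z2 Z)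
          (pB1 : hom B B1) (pB2 : hom B B2) (iB1 : hom B1 B) (iB2 : hom B2 B)
          (d1 : Eob E Z1 A1) (d2 : Eob E Z2 A2) (d : Eob E Z A)
          (f1 : hom A1 B1) (g1 : hom B1 Z1) (f2 : hom A2 B2) (g2 : hom B2 Z2),
      is_biprod pA1 pA2 iA1 iA2 -> is_biprod pZ1 pZ2 iZ1 iZ2 ->
      is_biprod pB1 pB2 iB1 iB2 ->
      is_Esum pA1 pA2 iZ1 iZ2 d1 d2 d ->
      @s _ _ d1 B1 f1 g1 -> @s _ _ d2 B2 f2 g2 ->
      @s _ _ d B (comp iB1 (comp f1 pA1) + comp iB2 (comp f2 pA2))
            (comp iZ1 (comp g1 pB1) + comp iZ2 (comp g2 pB2))).

Definition ET3 : Prop :=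
  forall A Z A' Z' (d : Eob E Z A) (d' : Eob E Z' A') B B'
         (f : hom A B) (g : hom B Z) (f' : hom A' B') (g' : hom B' Z')
         (a : hom A A') (b : hom B B'),
    @s _ _ d B f g -> @s _ _ d' B' f' g' -> comp b f = comp f' a ->
    exists c : hom Z Z', comp g' b = comp c g /\ push E a d = pull E c d'.

Definition ET3op : Prop :=
  forall A Z A' Z' (d : Eob E Z A) (d' : Eob E Z' A') B B'
         (f : hom A B) (g : hom B Z) (f' : hom A' B') (g' : hom B' Z')
         (b : hom B B') (c : hom Z Z'),
    @s _ _ d B f g -> @s _ _ d' B' f' g' -> comp g' b = comp c g ->
    exists a : hom A A', comp b f = comp f' a /\ push E a d = pull E c d'.

Definition ET4 : Prop :=
  forall A B C' D F (d : Eob E D A) (d' : Eob E F B)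
         (f : hom A B) (f' : hom B D) (g : hom B C') (g' : hom C' F),
    @s _ _ d B f f' -> @s _ _ d' C' g g' ->
    exists (X : ob C) (dd : Eob E X A) (h' : hom C' X)
           (x : hom D X) (e : hom X F),
      [/\ @s _ _ dd C' (comp g f) h',
          @s _ _ (push E f' d') X x e,
          comp x f' = comp h' g /\ comp e h' = g',
          pull E x dd = d
        & push E f dd = pull E e d'].

Definition ET4op : Prop :=
  forall D B A F C' (d : Eob E A D) (d' : Eob E B F)
         (f' : hom D B) (f : hom B A) (g' : hom F C') (g : hom C' B),
    @s _ _ d B f' f -> @s _ _ d' C' g' g ->
    exists (X : ob C) (dd : Eob E A X) (h' : hom X C')
           (e : hom F X) (x : hom X D),
      [/\ @s _ _ dd C' h' (comp f g),
          @s _ _ (pull E f' d') X e x,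
          comp f' x = comp g h' /\ comp h' e = g',
          push E x dd = d
        & pull E f dd = push E e d'].
End Real.
End Bifun.

Record extri := Extri {
  xcat :> precat;
  x_additive : additive_cat xcat;
  xE : bifunctor xcat;
  xs : realization_data xE;
  x_ET1 : biadditive_functor xE;
  x_real : is_realization xs;
  x_ET2 : additive_realization xs;
  x_ET3 : ET3 xs;
  x_ET3op : ET3op xs;
  x_ET4 : ET4 xs;
  x_ET4op : ET4op xs
}.

Section Extri.
Variable X : extri.
Local Notation E := (xE X).
Local Notation Eg := (Eob (xE X)).

Definition Etri (Z A B : ob X) (d : Eg Z A) (f : hom A B) (g : hom B Z) : Prop :=
  @xs X _ _ d B f g.

Definition enough_injective_objects : Prop :=
  forall A : ob X, exists (I Z : ob X) (d : Eg Z A) (f : hom A I) (g : hom I Z),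
    Etri d f g /\ (forall (Y : ob X) (t : Eg Y I), t = 0).

Definition enough_projective_morphisms : Prop :=
  forall Z : ob X, exists (K P : ob X) (gm : Eg Z K) (k : hom K P) (p : hom P Z),
    Etri gm k p /\ (forall (A : ob X) (d : Eg Z A), pull E p d = 0).

Definition subfunctor := forall Z A : ob X, Eg Z A -> Prop.

Definition is_additive_subfunctor (F : subfunctor) : Prop :=
  [/\ (forall Z A, F Z A 0),
      (forall Z A (d d' : Eg Z A), F Z A d -> F Z A d' -> F Z A (d - d')),
      (forall Z A A' (a : hom A A') (d : Eg Z A), F Z A d -> F Z A' (push E a d))
    & (forall Z Z' A (c : hom Z' Z) (d : Eg Z A), F Z A d -> F Z' A (pull E c d))].

(* ideals of morphisms are represented as predicates on all hom-sets *)
Definition morclass := forall Y Z : ob X, hom Y Z -> Prop.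

Definition Ph (F : subfunctor) : morclass :=
  fun Y Z phi => forall (A : ob X) (d : Eg Z A), F Y A (pull E phi d).

Definition Finj (F : subfunctor) : morclass :=
  fun A Y i => forall (Z : ob X) (d : Eg Z A), F Z A d -> push E i d = 0.

Definition star (I : morclass) : subfunctor :=
  fun Y A t => exists (Z : ob X) (i : hom Y Z) (d : Eg Z A), I Y Z i /\ t = pull E i d.

Definition perpE (I : morclass) : morclass :=
  fun A Y g => forall (W Z : ob X) (m : hom W Z) (d : Eg Z A),
    I W Z m -> pull E m (push E g d) = 0.

Definition Ftri (F : subfunctor) (Z A B : ob X) (d : Eg Z A)
    (f : hom A B) (g : hom B Z) : Prop := Etri d f g /\ F Z A d.

Definition enough_injective_morphisms (F : subfunctor) : Prop :=
  forall A : ob X, exists (B Z : ob X) (d : Eg Z A) (e : hom A B) (g : hom B Z),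
    Ftri F d e g /\ Finj F e.

(* morphism (id_A, b, phi) of E-triangles from (d,e,g) to (d',f',g') *)
Definition enough_special_injective_morphisms (F : subfunctor) : Prop :=
  forall A : ob X, exists (B Z : ob X) (d : Eg Z A) (e : hom A B) (g : hom B Z),
    [/\ Ftri F d e g, Finj F e &
      exists (B' Z' : ob X) (d' : Eg Z' A) (f' : hom A B') (g' : hom B' Z')
             (b : hom B B') (phi : hom Z Z'),
        [/\ Etri d' f' g',
            comp b e = comp f' (idm A),
            comp g' b = comp phi g,
            push E (idm A) d = pull E phi d'
          & Ph F phi]].

Definition subfunctor_eq (F G : subfunctor) : Prop :=
  forall Z A (d : Eg Z A), F Z A d <-> G Z A d.

Definition morclass_eq (I J : morclass) : Prop :=
  forall Y Z (f : hom Y Z), I Y Z f <-> J Y Z f.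
End Extri.

(* Main.v *)
Require Import Defs.
From mathcomp Require Import all_boot all_algebra.
Set Implicit Arguments. Unset Strict Implicit. Unset Printing Implicit Defensive.
Import GRing.Theory.

Section Proofs.
Local Open Scope ring_scope.
Variable X : extri.
Local Notation E := (xE X).
Local Notation Eg := (Eob (xE X)).
Local Notation comp := Defs.comp.
Local Notation hm := (@Defs.hom (xcat X)).

Lemma ET1_all : biadditive_functor E.
Proof. exact: x_ET1. Qed.

Lemma pull_id Z A (d : Eg Z A) : pull E (idm Z) d = d.
Proof. by case: ET1_all. Qed.
Lemma push_id Z A (d : Eg Z A) : push E (idm A) d = d.
Proof. by case: ET1_all => _ []. Qed.
Lemma pull_comp (Y0 Y Z A : ob X) (c : hm Y Z) (c' : hm Y0 Y) (d : Eg Z A) :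
  pull E (comp c c') d = pull E c' (pull E c d).
Proof. by case: ET1_all => _ [_ []]. Qed.
Lemma push_pull (Y Z A B : ob X) (c : hm Y Z) (a : hm A B) (d : Eg Z A) :
  push E a (pull E c d) = pull E c (push E a d).
Proof. by case: ET1_all => _ [_ [_ [_ []]]]. Qed.
Lemma pull0 (Y Z A : ob X) (c : hm Y Z) : pull E c (0 : Eg Z A) = 0.
Proof.
case: ET1_all => _ [_ [_ [_ [_ [H _]]]]].
have := H _ _ A c 0 0; rewrite addr0 => h.
by apply: (addrI (pull E c (0 : Eg Z A))); rewrite addr0 -h.
Qed.
Lemma push0 (Z A B : ob X) (a : hm A B) : push E a (0 : Eg Z A) = 0.
Proof.
case: ET1_all => _ [_ [_ [_ [_ [_ [H _]]]]]].
have := H Z _ _ a 0 0; rewrite addr0 => h.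
by apply: (addrI (push E a (0 : Eg Z A))); rewrite addr0 -h.
Qed.
Lemma comp0r (A B C : ob X) (g : hm B C) : comp g (0 : hm A B) = 0.
Proof.
have := compDr g (0 : hm A B) 0; rewrite addr0 => h.
by apply: (addrI (comp g (0 : hm A B))); rewrite addr0 -h.
Qed.
Lemma comp0l (A B C : ob X) (f : hm A B) : comp (0 : hm B C) f = 0.
Proof.
have := compDl (0 : hm B C) 0 f; rewrite addr0 => h.
by apply: (addrI (comp (0 : hm B C) f)); rewrite addr0 -h.
Qed.

Lemma split_tri (A Z : ob X) : exists P (p1 : hm P A) (p2 : hm P Z) i1 i2,
  is_biprod p1 p2 i1 i2 /\ Etri (0 : Eg Z A) i1 p2.
Proof.
case: (x_additive X) => _ /(_ A Z) [P [p1 [p2 [i1 [i2 H]]]]].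
exists P, p1, p2, i1, i2; split => //.
by case: (x_ET2 X) => H1 _; apply: H1 H.
Qed.

Lemma zero_obj : exists O : ob X, is_zero_obj O.
Proof. by case: (x_additive X). Qed.

Lemma infl_kills (Z A B : ob X) (d : Eg Z A) f g :
  Etri d f g -> push E f d = 0 :> Eg Z B.
Proof.
move=> Ht.
have [O HO] := zero_obj.
have Hb : is_biprod (idm B) (0 : hm B O) (idm B) 0.
  have e1 : idm O = 0 by case: (HO O) => H _; apply: H.
  split; rewrite ?comp1m ?comp0r ?comp0l ?e1 //.
  by rewrite addr0.
have Hs : Etri (0 : Eg O B) (idm B) 0 by case: (x_ET2 X) => H1 _; apply: H1 Hb.
have [c [_ ->]] := x_ET3 Ht Hs (a := f) (b := idm B) erefl.
by rewrite pull0.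
Qed.

Lemma defl_kills (Z A B : ob X) (d : Eg Z A) (f : hm A B) g :
  Etri d f g -> pull E g d = 0.
Proof.
move=> Ht.
have [O HO] := zero_obj.
have Hb : is_biprod (0 : hm B O) (idm B) 0 (idm B).
  have e1 : idm O = 0 by case: (HO O) => H _; apply: H.
  split; rewrite ?comp1m ?comp0r ?comp0l ?e1 //.
  by rewrite add0r.
have Hs : Etri (0 : Eg B O) 0 (idm B) by case: (x_ET2 X) => H1 _; apply: H1 Hb.
have [a [_ <-]] := x_ET3op Hs Ht (b := idm B) (c := g) erefl.
by rewrite push0.
Qed.

Lemma real4 : forall (A Z A' Z' : ob X) (d : Eg Z A) (d' : Eg Z' A')
              (a : hm A A') (c : hm Z Z') B B' (f : hm A B) (g : hm B Z)
              (f' : hm A' B') (g' : hm B' Z'),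
          push E a d = pull E c d' -> Etri d f g -> Etri d' f' g' ->
          exists b : hm B B', comp b f = comp f' a /\ comp g' b = comp c g.
Proof. by case: (x_real X). Qed.

Lemma realize (Z A : ob X) (d : Eg Z A) : exists B (f : hm A B) (g : hm B Z), Etri d f g.
Proof. by case: (x_real X) => H _ _ _; apply: H. Qed.

Lemma hom_exact (Z0 B Y W : ob X) (t : Eg Z0 B) (u : hm B Y) (phi : hm Y Z0)
  (m : hm W Z0) : Etri t u phi -> pull E m t = 0 -> exists s : hm W Y, m = comp phi s.
Proof.
move=> Ht H0.
have [P [p1 [p2 [i1 [i2 [Hb Hs]]]]]] := split_tri B W.
have E0 : push E (idm B) (0 : Eg W B) = pull E m t by rewrite push_id H0.
have [b [_ Hb2]] := real4 E0 Hs Ht.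
exists (comp b i2).
case: Hb => _ e2 _ _ _.
by rewrite Defs.compA Hb2 -Defs.compA e2 compm1.
Qed.

Lemma hom_exact' (C A Y B : ob X) (t : Eg C A) (x : hm A Y) (y : hm Y C)
  (e : hm A B) : Etri t x y -> push E e t = 0 -> exists e' : hm Y B, e = comp e' x.
Proof.
move=> Ht H0.
have [P [p1 [p2 [i1 [i2 [Hb Hs]]]]]] := split_tri B C.
have E0 : push E e t = pull E (idm C) (0 : Eg C B) by rewrite pull_id H0.
have [b [Hb1 _]] := real4 E0 Ht Hs.
exists (comp p1 b).
case: Hb => e1 _ _ _ _.
by rewrite -Defs.compA Hb1 Defs.compA e1 comp1m.
Qed.

Lemma E_exact (Z A B C : ob X) (d : Eg Z A) (e : hm A B) (g : hm B Z) (t : Eg C A) :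
  Etri d e g -> push E e t = 0 -> exists c : hm C Z, t = pull E c d.
Proof.
move=> Hd H0.
have [Y [x [y Ht]]] := realize t.
have [e' He] := hom_exact' Ht H0.
have [c [_ Hc]] := x_ET3 Ht Hd (a := idm A) (b := e') (etrans (esym He) (esym (compm1 _))).
by exists c; rewrite -Hc push_id.
Qed.

Lemma E_exact' (Z K P A : ob X) (gm : Eg Z K) (k : hm K P) (p : hm P Z) (d : Eg Z A) :
  Etri gm k p -> pull E p d = 0 -> exists a : hm K A, d = push E a gm.
Proof.
move=> Hg H0.
have [Y [x [y Ht]]] := realize d.
have [s Hs] := hom_exact Ht H0.
have [a [_ Ha]] := x_ET3op Hg Ht (b := s) (c := idm Z) (etrans (esym Hs) (esym (comp1m _))).
by exists a; rewrite Ha pull_id.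
Qed.

Variable F : subfunctor X.
Hypothesis HF : is_additive_subfunctor F.

Lemma F_pull (Z Z' A : ob X) (c : hm Z' Z) (d : Eg Z A) : F d -> F (pull E c d).
Proof. by case: HF => _ _ _ H; apply: H. Qed.
Lemma F_push (Z A A' : ob X) (a : hm A A') (d : Eg Z A) : F d -> F (push E a d).
Proof. by case: HF => _ _ H _; apply: H. Qed.

Lemma Ph_comp (W Y Z : ob X) (phi : hm Y Z) (t : hm W Y) :
  Ph F phi -> Ph F (comp phi t).
Proof. by move=> H A d; rewrite pull_comp; apply: F_pull. Qed.

Lemma Ph_compl (W Y Z : ob X) (c : hm Y Z) (m : hm W Y) :
  Ph F m -> Ph F (comp c m).
Proof. by move=> H A d; rewrite pull_comp; apply: H. Qed.

Lemma star_sub (Z A : ob X) (d : Eg Z A) : star (Ph F) d -> F d.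
Proof. by case=> Z' [i [d' [Hi ->]]]. Qed.

Lemma one_two : enough_special_injective_morphisms F -> subfunctor_eq F (star (Ph F)).
Proof.
move=> H C A t; split; last exact: star_sub.
move=> Ft.
have [B [Z [d [e [g [[Hd Fd] He [B' [Z' [d' [f' [g' [b [phi [_ _ _ Hdd Hphi]]]]]]]]]]]]]] := H A.
have [c ->] := E_exact Hd (He _ _ Ft).
exists Z', (comp phi c), d'; split; first exact: Ph_comp.
by rewrite pull_comp -Hdd push_id.
Qed.

Lemma two_one : enough_injective_morphisms F -> subfunctor_eq F (star (Ph F)) ->
  enough_special_injective_morphisms F.
Proof.
move=> HI H2 A.
have [B [Z [d [e [g [[Hd Fd] He]]]]]] := HI A.
exists B, Z, d, e, g; split => //.
have [Z' [phi [d' [Hphi Ed]]]] := (H2 _ _ d).1 Fd.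
have [B' [f' [g' Ht]]] := realize d'.
have E1 : push E (idm A) d = pull E phi d' by rewrite push_id.
have [b [Hb1 Hb2]] := real4 E1 Hd Ht.
by exists B', Z', d', f', g', b, phi; split.
Qed.

Lemma two_three : subfunctor_eq F (star (Ph F)) -> morclass_eq (perpE (Ph F)) (Finj F).
Proof.
move=> H2 A Y g; split.
- move=> Hg Z t Ft.
  have [Z' [m [d [Hm ->]]]] := (H2 _ _ t).1 Ft.
  by rewrite push_pull; apply: Hg.
- move=> Hg W Z m d Hm.
  by rewrite -push_pull; apply: Hg; apply: Hm.
Qed.

Lemma three_two : enough_injective_objects X -> enough_projective_morphisms X ->
  enough_injective_morphisms F ->
  morclass_eq (perpE (Ph F)) (Finj F) -> subfunctor_eq F (star (Ph F)).
Proof.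
move=> HIO HPM HIM H3 C A t; split; last exact: star_sub.
move=> Ft.
have [I [Z0 [eta [i [j [Heta Hinj]]]]]] := HIO A.
have [K [P [gm [k [p [Hgm Hproj]]]]]] := HPM Z0.
have [B [Z1 [d1 [e [g1 [[Hd1 Fd1] He]]]]]] := HIM K.
have [Y [u [phi Hphi]]] := realize (push E e gm).
have Phphi : Ph F phi.
  move=> A' d.
  have [a ->] := E_exact' Hgm (Hproj _ d).
  rewrite -push_pull; apply: F_push.
  have E0 : push E e (pull E phi gm) = 0 by rewrite push_pull (defl_kills Hphi).
  have [c ->] := E_exact Hd1 E0.
  exact: F_pull.
have [B0 [e0 [h Htheta]]] := realize (pull E phi eta).
have Hperp : perpE (Ph F) e0.
  move=> W Z m d Hm.
  have [c ->] := E_exact Heta (Hinj _ (push E i d)).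
  rewrite -push_pull -pull_comp.
  have Hcm : Ph F (comp c m) by apply: Ph_compl.
  have E0 : pull E (comp c m) (push E e gm) = 0.
    by rewrite -push_pull; apply: He; apply: Hcm.
  have [s ->] := hom_exact Hphi E0.
  by rewrite pull_comp push_pull (infl_kills Htheta) pull0.
have Hfinj := (H3 _ _ e0).1 Hperp.
have [c' ->] := E_exact Htheta (Hfinj _ _ Ft).
exists Z0, (comp phi c'), eta; split; first exact: Ph_comp.
by rewrite pull_comp.
Qed.

End Proofs.

Theorem corollary4p7 (X : extri) (F : subfunctor X) :
  enough_injective_objects X ->
  enough_projective_morphisms X ->
  is_additive_subfunctor F ->
  enough_injective_morphisms F ->
  (enough_special_injective_morphisms F <-> subfunctor_eq F (star (Ph F))) /\
  (subfunctor_eq F (star (Ph F)) <-> morclass_eq (perpE (Ph F)) (Finj F)).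
Proof.
move=> HIO HPM HF HIM; split; split.
- exact: one_two.
- exact: two_one.
- exact: two_three.
- exact: three_two.
Qed.
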